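(* In the setting of the standard presentation of $\mathbb{A}_{\Gamma,u,k}$, let $w\in W$ be adjacent to $u$ with $e=\{u,w\}$, $m_e=2\ell_e$, and assume $\ell_e\equiv 0\pmod k$. Let $M_{B(w,u)}$ be the $k\times(k+1)$ matrix of Fox derivatives, evaluated in $\Lambda=\mathbb{C}[H_1(\mathbb{A}_{\Gamma,u,k})]$, of the $k$ relations (RB) for $w$ with respect to $w_0,\dots,w_{k-1},\bar u$. Let $\mathfrak p\subset\Lambda$ be the ideal generated by $1-t_{\bar u}t_{w,0}t_{w,1}\cdots t_{w,k-1}$, where $t_{\bar u},t_{w,i}$ are the homology classes of $\bar u,w_i$. Then $M_{B(w,u)}\otimes\Lambda/\mathfrak p$ has rank $1$.
   Context: Setting: $\Gamma=(V,E,m)$ finite simple graph with even labels $m_e=2\ell_e$; $\mathbb{A}_\Gamma=\langle V\mid (xy)^{\ell_e}=(yx)^{\ell_e},\ \{x,y\}\in E\rangle$. For $u\in V$, $k\ge2$, $\mathbb{A}_{\Gamma,u,k}=\ker(\mathbb{A}_\Gamma\to\mathbb{Z}_k,\ u\mapsto1,\ v\mapsto0\ (v\ne u))$. $V_{2,u}$ = vertices joined to $u$ by an edge of label 2, $W=V\setminus(\{u\}\cup V_{2,u})$. Standard presentation generators: $\bar u=u^k$, $v\in V_{2,u}$, $w_i=u^iwu^{-i}$ ($w\in W$, $0\le i<k$). The relations (RB) for $w\in W$ adjacent to $u$: for $0\le i<k$, $W_i\cdots W_{i+\ell_e-1}=W_{i+1}\cdots W_{i+\ell_e}$ with $W_j=\bar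 u^qw_s\bar u^{-q}$ for $j=qk+s$, $0\le s<k$. $H_1(\mathbb{A}_{\Gamma,u,k})$ is free abelian and when $k\mid\ell_e$ the classes $t_{\bar u},t_{w,0},\dots,t_{w,k-1}$ are independent; $\mathfrak p$ is prime and rank over $\Lambda/\mathfrak p$ means rank over its fraction field. Fox derivatives of $A=B$ are those of $AB^{-1}$. *)

(* Defs.v *)
From HB Require Import structures.
From mathcomp Require Import all_boot all_order all_algebra.
From mathcomp Require Import fraction.
Set Implicit Arguments. Unset Strict Implicit. Unset Printing Implicit Defensive.
Import Order.TTheory GRing.Theory Num.Theory.
Local Open Scope ring_scope.

Notation tofrac := (@FracField.tofrac _).

(* RF F n = F(y_0,...,y_{n-1}), built as iterated fraction fields of
   univariate polynomial rings.  The Laurent polynomial ring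
   F[y_0^{+-1},...,y_{n-1}^{+-1}] is the subring [laurent] below. *)
Fixpoint RF (F : fieldType) (n : nat) : fieldType :=
  match n with
  | 0 => F
  | n'.+1 => {fraction {poly RF F n'}}
  end.

Fixpoint cst (F : fieldType) (n : nat) : F -> RF F n :=
  match n return F -> RF F n with
  | 0 => fun c => c
  | n'.+1 => fun c => tofrac ((cst n' c)%:P)
  end.

(* the variable y_i in RF F n (y_i = 0 if i >= n, never used) *)
Fixpoint var (F : fieldType) (n : nat) (i : nat) : RF F n :=
  match n return RF F n with
  | 0 => 0
  | n'.+1 => if i == n' then tofrac ('X : {poly RF F n'})
             else tofrac ((var F n' i)%:P)
  end.

Definition laurent (F : fieldType) (n : nat) (g : RF F n) : Prop :=
  exists s : seq (F * {ffun 'I_n -> int}),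
    g = \sum_(c <- s) cst n c.1 * \prod_(i < n) (var F n i) ^ (c.2 i).

(* A word is a list of letters (generator, sign); sign true = x, false = x^-1. *)
Definition word (G : Type) := seq (G * bool).

Definition inv_word (G : Type) (w : word G) : word G :=
  rev [seq (x.1, ~~ x.2) | x <- w].

(* Fox derivative d w / d x, evaluated under a map t sending each generator to
   an invertible element of a field R (here the generators' homology classes):
   d(y w') = d y + t(y) d w',  d y = [y = x],  d(y^-1) = - [y = x] t(y)^-1. *)
Fixpoint fox (G : eqType) (R : fieldType) (t : G -> R) (x : G) (w : word G)
  : R :=
  match w with
  | [::] => 0
  | (y, b) :: w' =>
      (if b then (y == x)%:R else - ((y == x)%:R * (t y)^-1))
      + (if b then t y else (t y)^-1) * fox t x w'
  end.

Definition fox_rel (G : eqType) (R : fieldType) (t : G -> R) (x : G)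
  (A B : word G) : R := fox t x (A ++ inv_word B).

(* Generators involved: None = \bar u = u^k, Some s = w_s (0 <= s < k). *)
Definition gen (k : nat) := option 'I_k.

Definition Wj' (k : nat) (hk : (0 < k)%N) (j : nat) : word (gen k) :=
  nseq (j %/ k) (None, true)
  ++ [:: (Some (Ordinal (ltn_pmod j hk)), true)]
  ++ nseq (j %/ k) (None, false).

Definition Wprod (k : nat) (hk : (0 < k)%N) (a len : nat) : word (gen k) :=
  flatten [seq Wj' hk j | j <- iota a len].

Definition RB_lhs (k : nat) (hk : (0 < k)%N) (l i : nat) := Wprod hk i l.
Definition RB_rhs (k : nat) (hk : (0 < k)%N) (l i : nat) := Wprod hk i.+1 l.

(* Homology classes in Lambda' = F[t_{w,0}^{+-1},...,t_{w,k-1}^{+-1},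
   t_{\bar u}^{+-1}] inside RF F k.+1:  t_{w,s} = y_s, t_{\bar u} = y_k. *)
Definition tcls (F : fieldType) (k : nat) (g : gen k) : RF F k.+1 :=
  match g with
  | None => var F k.+1 k
  | Some s => var F k.+1 s
  end.

(* column j of M: j < k  ->  w_j ;  j = k  ->  \bar u *)
Definition col_gen (k : nat) (j : 'I_k.+1) : gen k :=
  match unlift ord_max j with
  | Some s => Some s
  | None => None
  end.

Definition M_B (F : fieldType) (k : nat) (hk : (0 < k)%N) (l : nat)
  : 'M[RF F k.+1]_(k, k.+1) :=
  \matrix_(i < k, j < k.+1)
    fox_rel (tcls F (k := k)) (col_gen j) (RB_lhs hk l i) (RB_rhs hk l i).

Definition in_p (F : fieldType) (k : nat) (g : RF F k.+1) : Prop :=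
  exists h, laurent h /\
    g = (1 - var F k.+1 k * \prod_(s < k) var F k.+1 s) * h.

(* rank of (M tensor Lambda/p) over the fraction field of the domain
   Lambda/p, for M with entries in Lambda: an element of Lambda is zero in
   Frac(Lambda/p) iff it lies in p, and the rank of a matrix over a field is
   the largest size of a non-vanishing minor. *)
Definition rank_mod (R : fieldType) (inP : R -> Prop) (m n : nat)
  (M : 'M[R]_(m, n)) (r : nat) : Prop :=
  (exists (f : 'I_r -> 'I_m) (g : 'I_r -> 'I_n), ~ inP (\det (mxsub f g M)))
  /\ (forall (f : 'I_r.+1 -> 'I_m) (g : 'I_r.+1 -> 'I_n),
        inP (\det (mxsub f g M))).

(* Main.v *)
Require Import Defs.
From HB Require Import structures.
From mathcomp Require Import all_boot all_order all_algebra.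
From mathcomp Require Import fraction.
From mathcomp Require Import ring zify.
Set Implicit Arguments. Unset Strict Implicit. Unset Printing Implicit Defensive.
Import Order.TTheory GRing.Theory Num.Theory.
Local Open Scope ring_scope.

Section FoxGen.
Variables (G : finType) (K : fieldType) (t : G -> K).
Hypothesis tnz : forall y, t y != 0.

Definition tl (y : G * bool) : K := if y.2 then t y.1 else (t y.1)^-1.
Definition tw (w : word G) : K := \prod_(y <- w) tl y.

Lemma tl_nz y : tl y != 0.
Proof. by rewrite /tl; case: y.2; rewrite ?invr_eq0 tnz. Qed.

Lemma tw_nz w : tw w != 0.
Proof. by rewrite /tw; elim: w => [|y w IH]; rewrite ?big_nil ?oner_eq0 // big_cons mulf_neq0 ?tl_nz. Qed.

Lemma tw_cat u v : tw (u ++ v) = tw u * tw v.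
Proof. by rewrite /tw big_cat. Qed.

Lemma fox_cat x u v : fox t x (u ++ v) = fox t x u + tw u * fox t x v.
Proof.
elim: u => [|[y b] u IH] /=; first by rewrite /tw big_nil add0r mul1r.
by rewrite IH /tw big_cons /tl /= mulrDr addrA mulrA.
Qed.

Lemma inv_word_cons (y : G * bool) (w : word G) : inv_word (y :: w) = inv_word w ++ [:: (y.1, ~~ y.2)].
Proof. by rewrite /inv_word /= rev_cons cats1. Qed.

Lemma tw_inv w : tw (inv_word w) = (tw w)^-1.
Proof.
elim: w => [|y w IH]; first by rewrite /tw /inv_word /= !big_nil invr1.
rewrite inv_word_cons tw_cat IH /tw big_cons big_cons big_nil /tl /=.
by case: y.2 => /=; rewrite mulr1 invfM ?invrK mulrC.
Qed.

Lemma fox_inv x w : fox t x (inv_word w) = - (tw w)^-1 * fox t x w.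
Proof.
elim: w => [|[y b] w IH]; first by rewrite /inv_word /= mulr0.
rewrite inv_word_cons fox_cat IH tw_inv /= /tw big_cons -/(tw w) /tl /=.
have := tw_nz w; have := tnz y; set T := tw w; set ty := t y => hy hT.
case: b => /=; rewrite mulr0 addr0; field; by rewrite hy hT.
Qed.

Lemma fox_fund w : \sum_x fox t x w * (t x - 1) = tw w - 1.
Proof.
elim: w => [|[y b] w IH] /=.
  by rewrite /tw big_nil subrr big1 // => x _; rewrite mul0r.
rewrite /tw big_cons -/(tw w) /tl /=.
under eq_bigr => x _ do rewrite mulrDl -mulrA.
rewrite big_split /= -mulr_sumr IH.
have E : forall g : G -> K, \sum_x (y == x)%:R * g x = g y.
  move=> g; rewrite (bigD1 y) //= eqxx mul1r big1 ?addr0 // => x hx.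
  by rewrite eq_sym (negPf hx) mul0r.
have := tnz y; set ty := t y => hy.
case: b => /=; first by rewrite E -/ty; ring.
under eq_bigr => x _ do rewrite mulNr mulrAC -mulrA.
rewrite sumrN E -/ty; field; by rewrite hy.
Qed.

Lemma fox_rel_eq x A B : tw A = tw B ->
  fox_rel t x A B = fox t x A - fox t x B.
Proof.
move=> e; rewrite /fox_rel fox_cat fox_inv e mulrA mulrN mulfV ?tw_nz //.
by rewrite mulN1r.
Qed.

Lemma fund_rel A B : tw A = tw B -> \sum_x fox_rel t x A B * (t x - 1) = 0.
Proof.
move=> e; rewrite /fox_rel.
by rewrite fox_fund tw_cat tw_inv e mulfV ?tw_nz ?subrr.
Qed.

End FoxGen.

Lemma sum_option (T : finType) (V : zmodType) (F : option T -> V) :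
  \sum_x F x = F None + \sum_y F (Some y).
Proof.
rewrite (bigD1 None) //=; congr (_ + _).
rewrite (reindex_omap Some id) /=; last by case.
by apply: eq_bigl => y; rewrite eqxx.
Qed.

Lemma big_window (R : Type) (idx : R) (op : Monoid.com_law idx) (f : nat -> R) n a :
  (forall j, f (j + n)%N = f j) ->
  \big[op/idx]_(a <= j < a + n) f j = \big[op/idx]_(0 <= j < n) f j.
Proof.
move=> per; elim: a => [|a IH]; first by rewrite add0n.
rewrite -IH; case: n per {IH} => [|n] per; first by rewrite !addn0 !big_geq.
rewrite [RHS](big_ltn (m := a)); last by lia.
rewrite addSn addnS big_nat_recr /=; last by lia.
by rewrite -addnS per Monoid.mulmC.
Qed.

Section Comp.
Variables (K : fieldType) (k : nat) (hk : (0 < k)%N) (x : 'I_k -> K) (U : K).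
Hypothesis xnz : forall s, x s != 0.
Hypothesis Unz : U != 0.

Definition tp (g : gen k) : K := match g with None => U | Some s => x s end.
Lemma tp_nz g : tp g != 0. Proof. by case: g. Qed.

Definition xx (m : nat) : K := x (Ordinal (ltn_pmod m hk)).
Definition Rp (a : nat) : K := \prod_(0 <= m < a) xx m.
Definition Pp : K := \prod_s x s.

Lemma xx_small (s : 'I_k) : xx s = x s.
Proof. by rewrite /xx; congr x; apply: val_inj; rewrite /= modn_small. Qed.

Lemma xx_per j : xx (j + k) = xx j.
Proof. by rewrite /xx; congr x; apply: val_inj; rewrite /= modnDr. Qed.

Lemma Rp_nz a : Rp a != 0.
Proof. by rewrite /Rp prodf_seq_neq0; apply/allP => m _; exact: xnz. Qed.

Lemma Rp_S a : Rp a.+1 = Rp a * xx a.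
Proof. by rewrite /Rp big_nat_recr. Qed.

Lemma Rp_per j : Rp (j + k) = Rp j * Pp.
Proof.
rewrite /Rp (big_cat_nat (n := j)) ?leq_addr //= (@big_window _ _ _ xx k j); last exact: xx_per.
rewrite /Pp; congr (_ * _); rewrite big_mkord; apply: eq_bigr => s _; exact: xx_small.
Qed.

Lemma tw_nseq n y : tw tp (nseq n y) = tl tp y ^+ n.
Proof. by elim: n => [|n IH]; rewrite /tw ?big_nil // big_cons -/(tw _ _) IH exprS. Qed.

Lemma fox_nseq r n b : fox tp (Some r) (nseq n (None, b)) = 0.
Proof. by elim: n => [|n IH] //=; rewrite IH mulr0 addr0; case: (b); rewrite /= ?mul0r ?oppr0. Qed.

Lemma tw_W j : tw tp (Wj' hk j) = xx j.
Proof.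
rewrite /Wj' !tw_cat !tw_nseq /tw big_cons big_nil /tl /= mulr1 -/(xx j).
by rewrite mulrCA -exprMn mulfV // expr1n mulr1.
Qed.

Lemma fox_W r j : fox tp (Some r) (Wj' hk j) = U ^+ (j %/ k)%N * ((j %% k)%N == r)%:R.
Proof.
rewrite /Wj' !fox_cat ?fox_nseq ?tw_nseq //= !mulr0 !addr0 add0r /tl /=.
by [].
Qed.

Lemma Wprod_S a n : Wprod hk a n.+1 = Wprod hk a n ++ Wj' hk (a + n).
Proof. by rewrite /Wprod -addn1 iotaD map_cat flatten_cat /= cats0. Qed.

Lemma tw_Wprod a n : Rp a * tw tp (Wprod hk a n) = Rp (a + n).
Proof.
elim: n => [|n IH]; first by rewrite addn0 /Wprod /= /tw big_nil mulr1.
by rewrite Wprod_S tw_cat tw_W mulrA IH addnS Rp_S.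
Qed.

Lemma fox_Wprod g a n : Rp a * fox tp g (Wprod hk a n) =
  \sum_(a <= j < a + n) Rp j * fox tp g (Wj' hk j).
Proof.
elim: n => [|n IH]; first by rewrite addn0 big_geq // /Wprod /= mulr0.
rewrite Wprod_S fox_cat mulrDr IH mulrA tw_Wprod addnS big_nat_recr //=.
exact: leq_addr.
Qed.

Hypothesis UP : U * Pp = 1.

Definition ff (r : 'I_k) (j : nat) : K :=
  Rp j * U ^+ (j %/ k)%N * ((j %% k)%N == r)%:R.

Lemma ff_per r j : ff r (j + k) = ff r j.
Proof.
rewrite /ff Rp_per addnC -{1 3}(mul1n k) divnMDl // modnMDl add1n exprS.
by rewrite -[RHS]mulr1 -UP; ring.
Qed.

Lemma ff_perq r q j : ff r (j + q * k) = ff r j.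
Proof. by elim: q => [|q IH]; rewrite ?mul0n ?addn0 // mulSnr addnA ff_per. Qed.

Lemma ff_sum0 r : \sum_(0 <= j < k) ff r j = Rp r.
Proof.
rewrite big_mkord (bigD1 r) //= big1 ?addr0.
  by rewrite /ff divn_small // modn_small // eqxx expr0 !mulr1.
move=> j hj; rewrite /ff divn_small // modn_small // expr0 mulr1.
by rewrite (_ : (j == r :> nat) = false) ?mulr0 //; apply/negbTE.
Qed.

Lemma ff_sum r i q : \sum_(i <= j < i + q * k) ff r j = q%:R * Rp r.
Proof.
rewrite (@big_window _ _ _ (ff r) (q * k) i); last exact: ff_perq.
elim: q => [|q IH]; first by rewrite mul0n big_geq // mul0r.
rewrite mulSnr (big_cat_nat (n := q * k)) ?leq_addr //= IH.
rewrite (@big_window _ _ _ (ff r) k (q * k)); last exact: ff_per.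
by rewrite ff_sum0 mulrSr mulrDl mul1r.
Qed.

Lemma Rp_q a q : Rp (a + q * k) = Rp a * Pp ^+ q.
Proof.
elim: q => [|q IH]; first by rewrite mul0n addn0 expr0 mulr1.
by rewrite mulSnr addnA Rp_per IH exprSr mulrA.
Qed.

Lemma tw_Wprod_q a q : tw tp (Wprod hk a (q * k)) = Pp ^+ q.
Proof.
have := tw_Wprod a (q * k); rewrite Rp_q; exact: (mulfI (Rp_nz a)).
Qed.

Lemma fox_Wprod_q r a q :
  fox tp (Some r) (Wprod hk a (q * k)) = q%:R * Rp r / Rp a.
Proof.
have := fox_Wprod (Some r) a (q * k).
under eq_bigr => j _ do rewrite fox_W mulrA.
rewrite ff_sum => <-; rewrite mulrC mulrA mulVf ?mul1r //; exact: Rp_nz.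
Qed.

Definition Eent (q i : nat) (g : gen k) : K :=
  fox_rel tp g (Wprod hk i (q * k)) (Wprod hk i.+1 (q * k)).

Definition aa (q i : nat) : K := q%:R * ((Rp i)^-1 - (Rp i.+1)^-1).

Definition beta (g : gen k) : K :=
  match g with Some r => Rp r | None => (1 - Pp) / (U - 1) end.

Lemma Eent_Some q i r : Eent q i (Some r) = aa q i * Rp r.
Proof.
rewrite /Eent fox_rel_eq ?tw_Wprod_q //; last exact: tp_nz.
rewrite !fox_Wprod_q /aa; ring.
Qed.

Lemma Rp0 : Rp 0 = 1. Proof. by rewrite /Rp big_geq. Qed.

Lemma sum_Rp : \sum_(s < k) Rp s * (x s - 1) = Pp - 1.
Proof.
have -> : Pp - 1 = Rp k - Rp 0 by rewrite Rp0 -(add0n k) Rp_per Rp0 mul1r.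
rewrite -(telescope_sumr _ (leq0n k)) big_mkord; apply: eq_bigr => s _.
by rewrite Rp_S xx_small; ring.
Qed.

Hypothesis Pne1 : Pp != 1.

Lemma Eent_None q i : Eent q i None = aa q i * ((1 - Pp) / (U - 1)).
Proof.
have U1 : U - 1 != 0.
  rewrite subr_eq0; apply: contra Pne1 => /eqP U1; apply/eqP.
  by rewrite -UP U1 mul1r.
have := @fund_rel _ _ tp tp_nz _ _
  (etrans (tw_Wprod_q i q) (esym (tw_Wprod_q i.+1 q))).
rewrite sum_option /=.
rewrite (eq_bigr (fun s : 'I_k => aa q i * (Rp s * (x s - 1)))) => [|s _]; last first.
  by rewrite -[fox_rel _ _ _ _]/(Eent q i (Some s)) Eent_Some mulrA.
rewrite -mulr_sumr sum_Rp -/(Eent q i None) => h.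
apply: (mulIf U1); rewrite -mulrA divfK //.
apply/eqP; rewrite -subr_eq0; apply/eqP.
transitivity (Eent q i None * (U - 1) + aa q i * (Pp - 1)); [ring | exact: h].
Qed.

Lemma Eent_all q i g : Eent q i g = aa q i * beta g.
Proof. by case: g => [r|]; rewrite ?Eent_Some ?Eent_None. Qed.

End Comp.

Section RFfacts.
Variable F : fieldType.

Lemma cstD n a b : cst n (a + b) = cst n a + cst n b :> RF F n.
Proof. by elim: n => [|n IH] //=; rewrite IH polyCD rmorphD. Qed.
Lemma cstM n a b : cst n (a * b) = cst n a * cst n b :> RF F n.
Proof. by elim: n => [|n IH] //=; rewrite IH polyCM rmorphM. Qed.
Lemma cst1 n : cst n 1 = 1 :> RF F n.
Proof. by elim: n => [|n IH] //=; rewrite IH rmorph1. Qed.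

Lemma var_nz n (i : nat) : (i < n)%N -> var F n i != 0.
Proof.
elim: n => [|n IH] //= hi; case: ifP => [_|ne].
  by rewrite tofrac_eq0 polyX_eq0.
by rewrite tofrac_eq0 polyC_eq0 IH // ltn_neqAle ne -ltnS.
Qed.

Lemma X_ne1 (K : fieldType) : ('X : {poly K}) != 1.
Proof. by apply/eqP => /(congr1 (horner^~ 0)); rewrite hornerX hornerC => /eqP; rewrite eq_sym oner_eq0. Qed.

Lemma var0_ne1 n : (0 < n)%N -> var F n 0 != 1.
Proof.
elim: n => [|n IH] //= _; case: ifP => [_|ne].
  by rewrite -tofrac1 tofrac_eq X_ne1.
by rewrite -tofrac1 tofrac_eq -polyC1 (inj_eq polyC_inj) IH //; case: n ne {IH}.
Qed.

Lemma P_ne1 k : (0 < k)%N -> \prod_(s < k) var F k s != 1.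
Proof.
case: k => // k _; rewrite big_ord_recr /= eqxx.
have -> : \prod_(i < k) var F k.+1 (widen_ord (leqnSn k) i)
   = tofrac ((\prod_(i < k) var F k i)%:P).
  rewrite rmorph_prod rmorph_prod; apply: eq_bigr => i _ /=.
  by rewrite (ltn_eqF (ltn_ord i)).
rewrite -rmorphM -tofrac1 tofrac_eq; apply/eqP => /(congr1 (horner^~ 0)).
by rewrite hornerMX mulr0 hornerC => /eqP; rewrite eq_sym oner_eq0.
Qed.

End RFfacts.

Lemma natr_nz (F : numFieldType) n q : (0 < q)%N -> (q%:R : RF F n) != 0.
Proof.
move=> hq; elim: n => [|n IH] /=; first by rewrite pnatr_eq0 -lt0n.
have -> : (q%:R : RF F n.+1) = tofrac ((q%:R : RF F n)%:P).
  by rewrite polyC_natr rmorph_nat.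
by rewrite tofrac_eq0 polyC_eq0.
Qed.

Section Laurent.
Variables (F : fieldType) (n : nat).

Definition mono (c : F * {ffun 'I_n -> int}) : RF F n :=
  cst n c.1 * \prod_(i < n) (var F n i) ^ (c.2 i).

Lemma laurent_mono c : laurent (mono c).
Proof. by exists [:: c]; rewrite big_seq1. Qed.

Lemma laurent0 : laurent (0 : RF F n).
Proof. by exists [::]; rewrite big_nil. Qed.

Lemma laurentD (a b : RF F n) : laurent a -> laurent b -> laurent (a + b).
Proof. by move=> [s1 ->] [s2 ->]; exists (s1 ++ s2); rewrite big_cat. Qed.

Definition mulc (c : (F * {ffun 'I_n -> int}) * (F * {ffun 'I_n -> int}))
  : F * {ffun 'I_n -> int} := (c.1.1 * c.2.1, [ffun i => c.1.2 i + c.2.2 i]).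

Lemma monoM c1 c2 : mono c1 * mono c2 = mono (mulc (c1, c2)).
Proof.
rewrite /mono /= cstM.
rewrite /mulc /=.
have -> : \prod_(i < n) var F n i ^ [ffun i => c1.2 i + c2.2 i] i =
  \prod_(i < n) var F n i ^ c1.2 i * \prod_(i < n) var F n i ^ c2.2 i.
  rewrite -big_split /=; apply: eq_bigr => i _; rewrite ffunE exprzDr //.
  by rewrite unitfE var_nz.
ring.
Qed.

Lemma laurentM (a b : RF F n) : laurent a -> laurent b -> laurent (a * b).
Proof.
move=> [s1 ->] [s2 ->].
exists [seq mulc c | c <- [seq (c1, c2) | c1 <- s1, c2 <- s2]].
rewrite big_map big_allpairs big_distrlr /=.
by apply: eq_bigr => c1 _; apply: eq_bigr => c2 _; rewrite monoM.
Qed.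

Lemma laurent_cst (a : F) : laurent (cst n a).
Proof.
have -> : cst n a = mono (a, [ffun _ => 0]).
  by rewrite /mono /= big1 ?mulr1 // => i _; rewrite ffunE expr0z.
exact: laurent_mono.
Qed.

Lemma laurent1 : laurent (1 : RF F n).
Proof. by rewrite -(cst1 F n); exact: laurent_cst. Qed.

Lemma laurentN (a : RF F n) : laurent a -> laurent (- a).
Proof.
move=> la; rewrite -mulN1r; apply: laurentM => //.
have -> : (-1 : RF F n) = cst n (-1).
  by elim: (n) => //= m IH; rewrite -IH polyCN polyC1 rmorphN rmorph1.
exact: laurent_cst.
Qed.

Lemma laurent_var (i : 'I_n) (e : int) : laurent (var F n i ^ e).
Proof.
have -> : var F n i ^ e = mono (1, [ffun j => if j == i then e else 0]).
  rewrite /mono /= cst1 mul1r (bigD1 i) //= ffunE eqxx big1 ?mulr1 //.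
  by move=> j /negbTE hj; rewrite ffunE hj expr0z.
exact: laurent_mono.
Qed.

Lemma laurent_prod (I : Type) (r : seq I) (f : I -> RF F n) :
  (forall i, laurent (f i)) -> laurent (\prod_(i <- r) f i).
Proof. move=> h; apply: big_ind => //; [exact: laurent1 | exact: laurentM]. Qed.

End Laurent.

Section Ev.
Variables (K : fieldType) (c : K).

Definition ev_rel (g : {fraction {poly K}}) (v : K) :=
  exists a b : {poly K},
    [/\ b.[c] != 0, g = tofrac a / tofrac b & v = a.[c] / b.[c]].

Lemma hnz (b : {poly K}) : b.[c] != 0 -> tofrac b != 0.
Proof. by apply: contra; rewrite tofrac_eq0 => /eqP ->; rewrite horner0. Qed.

Lemma ev_poly p : ev_rel (tofrac p) p.[c].
Proof. by exists p, 1; rewrite hornerC tofrac1 !divr1 oner_eq0. Qed.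

Lemma ev_uniq g v v' : ev_rel g v -> ev_rel g v' -> v = v'.
Proof.
move=> [a [b [hb -> ->]]] [a' [b' [hb' e ->]]].
move/eqP: e; rewrite eqr_div ?hnz // -!tofracM tofrac_eq => /eqP /(congr1 (horner^~ c)).
by rewrite !hornerM => e; apply/eqP; rewrite eqr_div // e.
Qed.

Lemma ev_add g1 g2 v1 v2 : ev_rel g1 v1 -> ev_rel g2 v2 -> ev_rel (g1 + g2) (v1 + v2).
Proof.
move=> [a [b [hb -> ->]]] [a' [b' [hb' -> ->]]].
exists (a * b' + a' * b), (b * b'); split.
- by rewrite hornerM mulf_neq0.
- by rewrite tofracD !tofracM addf_div ?hnz.
- by rewrite hornerD !hornerM addf_div.
Qed.

Lemma ev_mul g1 g2 v1 v2 : ev_rel g1 v1 -> ev_rel g2 v2 -> ev_rel (g1 * g2) (v1 * v2).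
Proof.
move=> [a [b [hb -> ->]]] [a' [b' [hb' -> ->]]].
exists (a * a'), (b * b'); split.
- by rewrite hornerM mulf_neq0.
- by rewrite !tofracM mulf_div.
- by rewrite !hornerM mulf_div.
Qed.

Lemma ev_opp g v : ev_rel g v -> ev_rel (- g) (- v).
Proof.
move=> [a [b [hb -> ->]]]; exists (- a), b; split => //.
- by rewrite tofracN mulNr.
- by rewrite hornerN mulNr.
Qed.

Lemma ev_inv g v : ev_rel g v -> v != 0 -> ev_rel g^-1 v^-1.
Proof.
move=> [a [b [hb -> ->]]] hv.
have ha : a.[c] != 0 by apply: contra hv => /eqP ->; rewrite mul0r.
exists b, a; split => //.
- by rewrite invfM invrK mulrC.
- by rewrite invfM invrK mulrC.
Qed.

Lemma ev_1 : ev_rel 1 1.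
Proof. by have := ev_poly 1; rewrite tofrac1 hornerC. Qed.

Lemma ev_0 : ev_rel 0 0.
Proof. by have := ev_poly 0; rewrite tofrac0 hornerC. Qed.

Lemma ev_expn g v m : ev_rel g v -> ev_rel (g ^+ m) (v ^+ m).
Proof.
move=> h; elim: m => [|m IH]; first by rewrite !expr0; exact: ev_1.
by rewrite !exprS; apply: ev_mul.
Qed.

Lemma ev_exprz g v (e : int) : ev_rel g v -> v != 0 -> ev_rel (g ^ e) (v ^ e).
Proof.
move=> h hv; case: e => m /=; first exact: ev_expn.
by apply: ev_inv; [exact: ev_expn | exact: expf_neq0].
Qed.

End Ev.

Section Kpart.
Variables (F : fieldType) (k : nat).
Local Notation K := (RF F k).

Definition io (s : K) : RF F k.+1 := tofrac (s%:P).
Definition PK : K := \prod_(s < k) var F k s.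
Definition cc : K := PK^-1.
Definition Dp : RF F k.+1 := 1 - var F k.+1 k * \prod_(s < k) var F k.+1 s.

Lemma ioD a b : io (a + b) = io a + io b.
Proof. by rewrite /io polyCD rmorphD. Qed.
Lemma ioM a b : io (a * b) = io a * io b.
Proof. by rewrite /io polyCM rmorphM. Qed.
Lemma ioN a : io (- a) = - io a.
Proof. by rewrite /io polyCN rmorphN. Qed.
Lemma io1 : io 1 = 1.
Proof. by rewrite /io polyC1 rmorph1. Qed.
Lemma io0 : io 0 = 0.
Proof. by rewrite /io polyC0 rmorph0. Qed.
Lemma io_eq0 a : (io a == 0) = (a == 0).
Proof. by rewrite /io tofrac_eq0 polyC_eq0. Qed.
Lemma ioV a : io (a^-1) = (io a)^-1.
Proof.
have [->|ha] := eqVneq a 0; first by rewrite invr0 io0 invr0.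
have hio : io a != 0 by rewrite io_eq0.
by apply: (mulfI hio); rewrite -ioM !mulfV // io1.
Qed.

Lemma io_var (i : 'I_k) : io (var F k i) = var F k.+1 i.
Proof. by rewrite /io /= (ltn_eqF (ltn_ord i)). Qed.

Lemma var_top : var F k.+1 k = tofrac 'X.
Proof. by rewrite /= eqxx. Qed.

Lemma io_PK : io PK = \prod_(s < k) var F k.+1 s.
Proof.
rewrite /io /PK rmorph_prod rmorph_prod; apply: eq_bigr => i _.
exact: io_var.
Qed.

Lemma PK_nz : PK != 0.
Proof. by rewrite /PK prodf_seq_neq0; apply/allP => s _; apply: var_nz. Qed.

Lemma cc_nz : cc != 0.
Proof. by rewrite invr_eq0 PK_nz. Qed.

Lemma ev_var (i : 'I_k.+1) : exists2 v, v != 0 & ev_rel cc (var F k.+1 i) v.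
Proof.
rewrite /=; case: ifP => h.
  by exists cc; [exact: cc_nz | have := ev_poly cc 'X; rewrite hornerX].
exists (var F k i); last by have := ev_poly cc (var F k i)%:P; rewrite hornerC.
by apply: var_nz; rewrite ltn_neqAle h -ltnS ltn_ord.
Qed.

Lemma ev_lau (h : RF F k.+1) : laurent h -> exists w, ev_rel cc h w.
Proof.
move=> [s ->].
apply: (big_ind (fun g : RF F k.+1 => exists w, ev_rel cc g w)).
- by exists 0; exact: ev_0.
- by move=> a b [wa ha] [wb hb]; exists (wa + wb); exact: ev_add.
move=> c0 _.
have [w1 h1] : exists w, ev_rel cc (cst k.+1 c0.1) w.
  by exists (cst k c0.1); have := ev_poly cc (cst k c0.1)%:P; rewrite hornerC.
have [w2 h2] : exists w, ev_rel cc (\prod_(i < k.+1) var F k.+1 i ^ c0.2 i) w.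
  apply: (big_ind (fun g : RF F k.+1 => exists w, ev_rel cc g w)).
  - by exists 1; exact: ev_1.
  - by move=> a b [wa ha] [wb hb]; exists (wa * wb); exact: ev_mul.
  move=> i _; have [v hv ev] := ev_var i.
  by exists (v ^ c0.2 i); exact: ev_exprz.
by exists (w1 * w2); exact: ev_mul.
Qed.

Lemma Dp_io : Dp = 1 - tofrac 'X * io PK.
Proof. by rewrite /Dp io_PK var_top. Qed.

Lemma ev_Dp : ev_rel cc Dp 0.
Proof.
rewrite Dp_io.
have -> : (0 : K) = 1 - cc * PK by rewrite mulVf ?PK_nz ?subrr.
apply: ev_add; first exact: ev_1.
apply: ev_opp; apply: ev_mul; first by have := ev_poly cc 'X; rewrite hornerX.
by have := ev_poly cc PK%:P; rewrite hornerC.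
Qed.

Lemma in_p0 : in_p (0 : RF F k.+1).
Proof. by exists 0; split; [exact: laurent0 | rewrite mulr0]. Qed.

Lemma in_pD (a b : RF F k.+1) : in_p a -> in_p b -> in_p (a + b).
Proof.
move=> [h1 [l1 ->]] [h2 [l2 ->]]; exists (h1 + h2); split; last by rewrite mulrDr.
exact: laurentD.
Qed.

Lemma in_pMr (a b : RF F k.+1) : in_p a -> laurent b -> in_p (a * b).
Proof.
move=> [h1 [l1 ->]] lb; exists (h1 * b); split; last by rewrite mulrA.
exact: laurentM.
Qed.

Lemma in_pMl (a b : RF F k.+1) : laurent b -> in_p a -> in_p (b * a).
Proof. by move=> lb ha; rewrite mulrC; exact: in_pMr. Qed.

Lemma in_pN (a : RF F k.+1) : in_p a -> in_p (- a).
Proof.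
move=> [h1 [l1 ->]]; exists (- h1); split; last by rewrite mulrN.
exact: laurentN.
Qed.

Lemma in_p_Dp : in_p Dp.
Proof. by exists 1; split; [exact: laurent1 | rewrite mulr1]. Qed.

Lemma in_p_ev (g : RF F k.+1) v : in_p g -> ev_rel cc g v -> v = 0.
Proof.
move=> [h [lh ->]] ev; have [w hw] := ev_lau lh.
have := ev_mul ev_Dp hw; rewrite mul0r => e; exact: ev_uniq ev e.
Qed.

Definition Qrel (g : RF F k.+1) (s : K) :=
  [/\ laurent g, laurent (io s) & in_p (g - io s)].

Lemma Q_io s : laurent (io s) -> Qrel (io s) s.
Proof. by move=> l; split => //; rewrite subrr; exact: in_p0. Qed.

Lemma Q_add g1 g2 s1 s2 : Qrel g1 s1 -> Qrel g2 s2 -> Qrel (g1 + g2) (s1 + s2).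
Proof.
move=> [a1 b1 c1] [a2 b2 c2]; split; rewrite ?ioD; try exact: laurentD.
by rewrite opprD addrACA; exact: in_pD.
Qed.

Lemma Q_mul g1 g2 s1 s2 : Qrel g1 s1 -> Qrel g2 s2 -> Qrel (g1 * g2) (s1 * s2).
Proof.
move=> [a1 b1 c1] [a2 b2 c2]; split; rewrite ?ioM; try exact: laurentM.
have -> : g1 * g2 - io s1 * io s2 = (g1 - io s1) * g2 + io s1 * (g2 - io s2).
  by rewrite mulrBl mulrBr addrA subrK.
by apply: in_pD; [exact: in_pMr | exact: in_pMl].
Qed.

Lemma Q_opp g s : Qrel g s -> Qrel (- g) (- s).
Proof.
move=> [a b c]; split; rewrite ?ioN; try exact: laurentN.
by rewrite -opprD; exact: in_pN.
Qed.

Lemma Q_var (i : 'I_k) : Qrel (var F k.+1 i) (var F k i).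
Proof.
rewrite -io_var; apply: Q_io; rewrite io_var.
by have := @laurent_var F k.+1 (widen_ord (leqnSn k) i) 1; rewrite expr1z.
Qed.

Lemma Q_varV (i : 'I_k) : Qrel ((var F k.+1 i)^-1) ((var F k i)^-1).
Proof.
rewrite -io_var -ioV; apply: Q_io; rewrite ioV io_var.
by have := @laurent_var F k.+1 (widen_ord (leqnSn k) i) (-1); rewrite exprN1.
Qed.

Lemma laurent_ioPK : laurent (io PK).
Proof.
rewrite io_PK; apply: laurent_prod => s.
by have := @laurent_var F k.+1 (widen_ord (leqnSn k) s) 1; rewrite expr1z.
Qed.

Lemma laurent_iocc : laurent (io cc).
Proof.
rewrite /cc ioV io_PK -prodfV; apply: laurent_prod => s.
by have := @laurent_var F k.+1 (widen_ord (leqnSn k) s) (-1); rewrite exprN1.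
Qed.

Lemma Q_top : Qrel (var F k.+1 k) cc.
Proof.
split.
- by have := @laurent_var F k.+1 (ord_max : 'I_k.+1) 1; rewrite expr1z.
- exact: laurent_iocc.
have -> : var F k.+1 k - io cc = Dp * (- io cc).
  rewrite Dp_io -var_top mulrBl mul1r mulrN opprK -mulrA -ioM /cc mulfV ?PK_nz //.
  by rewrite io1 mulr1 addrC.
apply: in_pMr; first exact: in_p_Dp.
exact: laurentN laurent_iocc.
Qed.

Lemma Q_topV : Qrel ((var F k.+1 k)^-1) PK.
Proof.
split.
- by have := @laurent_var F k.+1 (ord_max : 'I_k.+1) (-1); rewrite exprN1.
- exact: laurent_ioPK.
have hY : var F k.+1 k != 0 by apply: var_nz.
have -> : (var F k.+1 k)^-1 - io PK = Dp * (var F k.+1 k)^-1.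
  rewrite Dp_io -var_top mulrBl mul1r mulrAC mulfV // mul1r.
  done.
apply: in_pMr; first exact: in_p_Dp.
by have := @laurent_var F k.+1 (ord_max : 'I_k.+1) (-1); rewrite exprN1.
Qed.

Definition xk (s : 'I_k) : K := var F k s.

Lemma Q_nat (b : bool) : Qrel (b%:R) (b%:R).
Proof.
case: b => /=; rewrite ?mulr1n ?mulr0n.
  by rewrite -{1}io1; apply: Q_io; rewrite io1; exact: laurent1.
by rewrite -{1}io0; apply: Q_io; rewrite io0; exact: laurent0.
Qed.

Lemma Q_fox g w : Qrel (fox (tcls F (k:=k)) g w) (fox (tp xk cc) g w).
Proof.
elim: w => [|[y b] w IH] /=.
  by rewrite -io0; apply: Q_io; rewrite io0; exact: laurent0.
have Qt : Qrel (tcls F y) (tp xk cc y) by case: y => [s|] /=; [exact: Q_var | exact: Q_top].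
have QtV : Qrel (tcls F y)^-1 (tp xk cc y)^-1.
  by case: y {Qt} => [s|] /=; [exact: Q_varV | rewrite /cc invrK; exact: Q_topV].
case: b; apply: Q_add; try (apply: Q_mul; [assumption | exact: IH]).
- exact: Q_nat.
- by apply: Q_opp; apply: Q_mul; [exact: Q_nat | exact: QtV].
Qed.

End Kpart.

Lemma Q_sign (F : fieldType) k (b : bool) :
  Qrel ((-1) ^+ b : RF F k.+1) ((-1) ^+ b).
Proof.
have Q1 : Qrel (1 : RF F k.+1) (1 : RF F k).
  by rewrite -{1}(io1 F k); apply: Q_io; rewrite io1; exact: laurent1.
case: b; rewrite ?expr1 ?expr0 //; exact: Q_opp.
Qed.

Lemma Q_det (F : fieldType) k n (A : 'M[RF F k.+1]_n) (B : 'M[RF F k]_n) :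
  (forall i j, Qrel (A i j) (B i j)) -> Qrel (\det A) (\det B).
Proof.
move=> hAB; rewrite /determinant.
apply: (big_ind2 (@Qrel F k)).
- by rewrite -{1}(io0 F k); apply: Q_io; rewrite io0; exact: laurent0.
- by move=> ? ? ? ? ; exact: Q_add.
move=> s _; apply: Q_mul; first exact: Q_sign.
apply: (big_ind2 (@Qrel F k)).
- by rewrite -{1}(io1 F k); apply: Q_io; rewrite io1; exact: laurent1.
- by move=> ? ? ? ? ; exact: Q_mul.
by move=> i _; exact: hAB.
Qed.

Lemma col_gen0 k (hk : (0 < k)%N) : col_gen (ord0 : 'I_k.+1) = Some (Ordinal hk).
Proof.
rewrite /col_gen; case: unliftP => [j /= e|e].
  by congr Some; apply: val_inj => /=; move/(congr1 val): e; rewrite /= /bump leqNgt ltn_ord.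
by move/(congr1 val): e => /= e; exfalso; move: (hk) => h; lia.
Qed.

Lemma rank1_det (K : fieldType) (a : 'I_2 -> K) (b : 'I_2 -> K) :
  \det (\matrix_(i, j) (a i * b j)) = 0.
Proof.
have -> : \matrix_(i, j) (a i * b j) = (\col_i a i) *m (\row_j b j).
  by apply/matrixP => i j; rewrite !mxE big_ord1 !mxE.
apply/eqP; apply: contraT => h.
have hu : (\col_i a i) *m (\row_j b j) \in unitmx by rewrite unitmxE unitfE.
have r1 : (\rank ((\col_i a i) *m (\row_j b j)) <= 1)%N :=
  leq_trans (mxrankM_maxl _ _) (rank_leq_col _).
by rewrite (mxrank_unit hu) in r1.
Qed.

Theorem lemma2p12 (F : numClosedFieldType) (k l : nat) (hk : (0 < k)%N) :
  (1 < k)%N -> (0 < l)%N -> (k %| l)%N ->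
  rank_mod (@in_p F k) (M_B F hk l) 1.
Proof.
move=> k1 l0 kl.
have [q lq] : exists q, l = (q * k)%N by exists (l %/ k)%N; rewrite divnK.
have q0 : (0 < q)%N by move: l0; rewrite lq muln_gt0 => /andP [].
subst l.
set x := @xk F k; set U := cc F k.
have xnz : forall s, x s != 0 by move=> s; apply: var_nz.
have Unz : U != 0 by exact: cc_nz.
have UP : U * Pp x = 1 by rewrite /U /cc /Pp mulVf //; exact: PK_nz.
have Pne1 : Pp x != 1 by exact: P_ne1.
set E := \matrix_(i < k, j < k.+1) (aa hk x q i * beta hk x U (col_gen j)).
have QM : forall i j, Qrel (M_B F hk (q * k) i j) (E i j).
  move=> i j; rewrite !mxE -Eent_all //; exact: Q_fox.
have QS : forall n (f : 'I_n -> 'I_k) (g : 'I_n -> 'I_k.+1),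
    Qrel (\det (mxsub f g (M_B F hk (q * k)))) (\det (mxsub f g E)).
  move=> n f g; apply: Q_det => i j.
  by have := QM (f i) (g j); rewrite !mxE.
split.
- pose f := fun _ : 'I_1 => Ordinal hk.
  pose g := fun _ : 'I_1 => (ord0 : 'I_k.+1).
  exists f, g => hin.
  have [_ _ hd] := QS _ f g.
  have : in_p (io (\det (mxsub f g E))).
    have -> : io (\det (mxsub f g E)) =
      \det (mxsub f g (M_B F hk (q * k))) + - (\det (mxsub f g (M_B F hk (q * k))) - io (\det (mxsub f g E))).
      by rewrite opprB addrC subrK.
    by apply: in_pD => //; exact: in_pN.
  move/in_p_ev => /(_ _ (ev_poly _ _)); rewrite hornerC det_mx11 !mxE /f /g col_gen0.
  apply/eqP; rewrite /beta /aa /= Rp0 Rp_S Rp0 mul1r invr1 mulr1.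
  rewrite mulf_neq0 ?natr_nz // subr_eq0 eq_sym invr_eq1.
  have -> : xx hk x 0 = var F k 0 by rewrite /xx /x /xk /= mod0n.
  by apply: var0_ne1; exact: ltnW.
- move=> f g.
  have [_ _ hd] := QS _ f g.
  have h0 : \det (mxsub f g E) = 0.
    have -> : mxsub f g E = \matrix_(i, j) (aa hk x q (f i) * beta hk x U (col_gen (g j))).
      by apply/matrixP => i j; rewrite !mxE.
    exact: rank1_det.
  by move: hd; rewrite h0 io0 subr0.
Qed.
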